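(* Let $f\in A[X]$ be monic with discriminant $\Delta=\mathrm{Res}_X(f,f')\neq 0$, $r=v(\Delta)$, and let $N>2r$ be an integer. Then the number of roots in $A/\pi^NA$ of the reduction $f_N$ of $f$ modulo $\pi^N$ is at most $q^{r+\lfloor r/2\rfloor+1}$.
   Context: $K$ is a field complete with respect to a non-archimedean discrete valuation $v$, normalized by $v(\pi)=1$ for a uniformizer $\pi$ of the valuation ring $A=\{x\in K: v(x)\geq 0\}$; the residue field $A/\pi A$ is finite with $q$ elements. *)

(* Defs.v *)
From HB Require Import structures.
From mathcomp Require Import all_boot all_order all_algebra.
Set Implicit Arguments. Unset Strict Implicit. Unset Printing Implicit Defensive.
Import Order.TTheory GRing.Theory Num.Theory.
Local Open Scope ring_scope.

(* A discrete valuation is encoded by v : K -> int on nonzero elements;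
   the value v 0 is irrelevant (v(0) = +oo by convention), which is handled
   through the predicate [vge]. *)

Definition vge (K : fieldType) (v : K -> int) (x : K) (n : int) : Prop :=
  x = 0 \/ n <= v x.

Definition inA (K : fieldType) (v : K -> int) (x : K) : Prop := vge v x 0.

Definition is_normalized_dval (K : fieldType) (v : K -> int) (pi : K) : Prop :=
  [/\ (forall x y : K, x != 0 -> y != 0 -> v (x * y) = v x + v y),
      (forall x y : K, x != 0 -> y != 0 -> x + y != 0 ->
         Num.min (v x) (v y) <= v (x + y)),
      pi != 0 & v pi = 1].

Definition dval_complete (K : fieldType) (v : K -> int) : Prop :=
  forall u : nat -> K,
    (forall n : int, exists m : nat, forall i j : nat,
        (m <= i)%N -> (m <= j)%N -> vge v (u i - u j) n) ->
    exists l : K, forall n : int, exists m : nat, forall i : nat,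
        (m <= i)%N -> vge v (u i - l) n.

(* The residue field A / pi A has exactly q elements: there is a complete
   system of q pairwise incongruent representatives in A. *)
Definition residue_card (K : fieldType) (v : K -> int) (q : nat) : Prop :=
  exists reps : seq K,
    [/\ size reps = q,
        (forall a, a \in reps -> inA v a),
        (forall i j : nat, (i < j < size reps)%N ->
            ~ vge v (nth 0 reps i - nth 0 reps j) 1) &
        (forall x : K, inA v x -> exists2 a, a \in reps & vge v (x - a) 1)].

(* A finite family s of elements of A representing pairwise distinct roots
   in A / pi^N A of f reduced mod pi^N. *)
Definition distinct_roots_mod (K : fieldType) (v : K -> int) (f : {poly K})
    (N : nat) (s : seq K) : Prop :=
  [/\ (forall x, x \in s -> inA v x),
      (forall x, x \in s -> vge v f.[x] N%:Z) &
      (forall i j : nat, (i < j < size s)%N ->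
          ~ vge v (nth 0 s i - nth 0 s j) N%:Z)].

(* Main.v *)
Require Import Defs.
From HB Require Import structures.
From mathcomp Require Import all_boot all_order all_algebra.
From mathcomp Require Import zify ring lra.
Set Implicit Arguments. Unset Strict Implicit. Unset Printing Implicit Defensive.
Import Order.TTheory GRing.Theory Num.Theory.
Local Open Scope ring_scope.

Lemma v1 (K : fieldType) (v : K -> int) pi (hv : is_normalized_dval v pi) : v 1 = 0.
Proof.
case: hv => hm _ _ _; have := hm 1 1 (oner_neq0 _) (oner_neq0 _).
rewrite mulr1 => h; lia.
Qed.

Lemma vN (K : fieldType) (v : K -> int) pi (hv : is_normalized_dval v pi) x :
  x != 0 -> v (- x) = v x.
Proof.
move=> x0; have hv1 := v1 hv; case: hv => hm _ _ _.
have n1 : (-1 : K) != 0 by rewrite oppr_eq0 oner_neq0.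
have := hm _ _ n1 n1; rewrite mulrNN mulr1 hv1 => h.
have := hm _ _ n1 x0; rewrite mulN1r => ->; lia.
Qed.

Lemma vge_le (K : fieldType) (v : K -> int) x (k l : int) :
  l <= k -> vge v x k -> vge v x l.
Proof. by move=> lk [->|h]; [left|right; apply: le_trans h]. Qed.

Lemma vge0 (K : fieldType) (v : K -> int) k : vge v 0 k.
Proof. by left. Qed.

Lemma vgeN (K : fieldType) (v : K -> int) pi (hv : is_normalized_dval v pi) x k :
  vge v x k -> vge v (- x) k.
Proof.
case=> [->|h]; first by rewrite oppr0; left.
case: (eqVneq x 0) => [->|x0]; first by rewrite oppr0; left.
by right; rewrite (vN hv x0).
Qed.

Lemma vgeD (K : fieldType) (v : K -> int) pi (hv : is_normalized_dval v pi) x y k :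
  vge v x k -> vge v y k -> vge v (x + y) k.
Proof.
case=> [->|hx]; first by rewrite add0r.
case=> [->|hy]; first by rewrite addr0; right.
case: (eqVneq x 0) => [->|x0]; first by rewrite add0r; right.
case: (eqVneq y 0) => [->|y0]; first by rewrite addr0; right.
case: (eqVneq (x + y) 0) => [->|s0]; first by left.
right; case: hv => _ hu _ _; apply: le_trans (hu _ _ x0 y0 s0).
by rewrite le_min hx hy.
Qed.

Lemma vgeB (K : fieldType) (v : K -> int) pi (hv : is_normalized_dval v pi) x y k :
  vge v x k -> vge v y k -> vge v (x - y) k.
Proof. by move=> hx hy; exact: (vgeD hv hx (vgeN hv hy)). Qed.

Lemma vgeM (K : fieldType) (v : K -> int) pi (hv : is_normalized_dval v pi) x y k l :
  vge v x k -> vge v y l -> vge v (x * y) (k + l).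
Proof.
case=> [->|hx]; first by rewrite mul0r; left.
case=> [->|hy]; first by rewrite mulr0; left.
case: (eqVneq x 0) => [->|x0]; first by rewrite mul0r; left.
case: (eqVneq y 0) => [->|y0]; first by rewrite mulr0; left.
by right; case: hv => hm _ _ _; rewrite hm //; apply: lerD.
Qed.

Lemma vge_sum (K : fieldType) (v : K -> int) pi (hv : is_normalized_dval v pi)
  (I : Type) (r : seq I) (P : pred I) (F : I -> K) k :
  (forall i, P i -> vge v (F i) k) -> vge v (\sum_(i <- r | P i) F i) k.
Proof.
move=> h; elim/big_rec: _ => [|i x Pi hx]; first by left.
by have := vgeD hv (h i Pi) hx.
Qed.

Lemma vge_prod (K : fieldType) (v : K -> int) pi (hv : is_normalized_dval v pi)
  (I : Type) (r : seq I) (P : pred I) (F : I -> K) :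
  (forall i, P i -> vge v (F i) 0) -> vge v (\prod_(i <- r | P i) F i) 0.
Proof.
move=> h; elim/big_rec: _ => [|i x Pi hx]; first by right; rewrite (v1 hv).
by have := vgeM hv (h _ Pi) hx; rewrite addr0.
Qed.

Lemma vge1 (K : fieldType) (v : K -> int) pi (hv : is_normalized_dval v pi) :
  vge v 1 0.
Proof. by right; rewrite (v1 hv). Qed.

Lemma vgeX (K : fieldType) (v : K -> int) pi (hv : is_normalized_dval v pi) x n :
  vge v x 0 -> vge v (x ^+ n) 0.
Proof.
move=> hx; elim: n => [|n IH]; first exact: vge1 hv.
by rewrite exprS; have := vgeM hv hx IH; rewrite addr0.
Qed.

Lemma vgeMn (K : fieldType) (v : K -> int) pi (hv : is_normalized_dval v pi) x n k :
  vge v x k -> vge v (x *+ n) k.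
Proof.
move=> hx; elim: n => [|n IH]; first by left; rewrite mulr0n.
by rewrite mulrS; have := vgeD hv hx IH.
Qed.

Lemma vpiX (K : fieldType) (v : K -> int) pi (hv : is_normalized_dval v pi) n :
  pi ^+ n != 0 /\ v (pi ^+ n) = n%:Z.
Proof.
have hv1 := v1 hv; case: hv => hm _ p0 vp.
elim: n => [|n [IH1 IH2]]; first by rewrite expr0 oner_neq0 hv1.
rewrite exprS mulf_neq0 // hm // vp IH2; split => //; lia.
Qed.

Lemma vge_vx (K : fieldType) (v : K -> int) x : x != 0 -> vge v x (v x).
Proof. by right. Qed.


Definition colrep (R : nzRingType) n (A : 'M[R]_n) (j : 'I_n) (X : 'I_n -> R) : 'M[R]_n :=
  \matrix_(i, k) if k == j then X i else A i k.

Lemma det_colrep (R : comNzRingType) n (A : 'M[R]_n) j X :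
  \det (colrep A j X) = \sum_i X i * cofactor A i j.
Proof.
rewrite (expand_det_col _ j); apply: eq_bigr => i _; rewrite mxE eqxx; congr (_ * _).
rewrite /cofactor; congr (_ * \det _); apply/matrixP => a b; rewrite !mxE.
by rewrite eq_sym (negPf (neq_lift _ _)).
Qed.

Lemma vgeM0 (K : fieldType) (v : K -> int) pi (hv : is_normalized_dval v pi) x y :
  vge v x 0 -> vge v y 0 -> vge v (x * y) 0.
Proof. by move=> hx hy; have := vgeM hv hx hy; rewrite addr0. Qed.

Lemma vge_sign (K : fieldType) (v : K -> int) pi (hv : is_normalized_dval v pi) k :
  vge v ((-1) ^+ k) 0.
Proof. by apply: (vgeX hv); apply: (vgeN hv); exact: vge1 hv. Qed.

Lemma det_int (K : fieldType) (v : K -> int) pi (hv : is_normalized_dval v pi) n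
  (A : 'M[K]_n) : (forall i j, vge v (A i j) 0) -> vge v (\det A) 0.
Proof.
move=> hA; apply: (vge_sum hv) => s _.
apply: (vgeM0 hv); first exact: (vge_sign hv).
by apply: (vge_prod hv) => i _; exact: hA.
Qed.

Lemma cof_int (K : fieldType) (v : K -> int) pi (hv : is_normalized_dval v pi) n
  (A : 'M[K]_n) i j : (forall i j, vge v (A i j) 0) -> vge v (cofactor A i j) 0.
Proof.
move=> hA; rewrite /cofactor.
have hp : vge v (\det (row' i (col' j A))) 0 by apply: (det_int hv) => a b; rewrite !mxE.
by have := vgeM hv (vge_sign hv _) hp; rewrite addr0.
Qed.

Lemma det_colrep_vge (K : fieldType) (v : K -> int) pi (hv : is_normalized_dval v pi) n
  (A : 'M[K]_n) j X l : (forall i j, vge v (A i j) 0) -> (forall i, vge v (X i) l) ->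
  vge v (\det (colrep A j X)) l.
Proof.
move=> hA hX; rewrite det_colrep; apply: (vge_sum hv) => i _.
by have := vgeM hv (hX i) (cof_int hv i j hA); rewrite addr0.
Qed.

Lemma keyG (K : fieldType) (v : K -> int) pi (hv : is_normalized_dval v pi) n
  (h1 : (1 < n)%N) (S : 'M[K]_n) x c a b (N m : int) (U W U' W' : 'I_n -> K) :
  0 <= m -> 0 <= N ->
  vge v x 0 -> vge v c N -> vge v a m -> vge v b 0 ->
  (forall i, vge v (U i) 0) -> (forall i, vge v (W i) 0) ->
  (forall i, vge v (U' i) 0) -> (forall i, vge v (W' i) 0) ->
  (forall i j, vge v (S i j) 0) ->
  (forall i, \sum_j S i j * x ^+ j = c * U i + a * W i) ->
  (forall i, \sum_j S i j * (x ^+ j.-1 *+ j) = a * U i + b * W i + c * U' i + a * W' i) ->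
  vge v (\det S) (Num.min N (m + m)).
Proof.
move=> m0 N0 hx hc ha hb hU hW hU' hW' hS h0 h1'.
have h0n : (0 < n)%N by apply: ltnW.
pose i0 := Ordinal h0n; pose i1 := Ordinal h1.
have i10 : i1 != i0 by [].
pose E1 : 'M[K]_n := \matrix_(k, j) if j == i0 then x ^+ k
   else if j == i1 then x ^+ k.-1 *+ k else (k == j)%:R.
have dE : \det E1 = 1.
  rewrite det_trig; last first.
    apply/is_trig_mxP => k j kj; rewrite mxE.
    have -> : (j == i0) = false by apply/eqP => e; move: kj; rewrite e.
    case: ifP => [/eqP e|_]; last by rewrite -val_eqE /= (ltn_eqF kj).
    by move: kj; rewrite e /= ltnS leqn0 => /eqP ->.
  apply: big1 => k _; rewrite mxE.
  case: ifP => [/eqP ->|_] //; case: ifP => [/eqP ->|_]; last by rewrite eqxx.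
  by rewrite /= expr0.
pose M := S *m E1.
have dM : \det M = \det S by rewrite det_mulmx dE mulr1.
have M0 : forall i, M i i0 = c * U i + a * W i.
  move=> i; rewrite -h0 mxE; apply: eq_bigr => k _; by rewrite mxE eqxx.
have M1 : forall i, M i i1 = a * U i + b * W i + c * U' i + a * W' i.
  move=> i; rewrite -h1' mxE; apply: eq_bigr => k _; by rewrite mxE eqxx.
have Mj : forall i j, j != i0 -> j != i1 -> M i j = S i j.
  move=> i j j0 j1; rewrite mxE (bigD1 j) //= mxE (negPf j0) (negPf j1) eqxx mulr1.
  rewrite big1 ?addr0 // => k kj; rewrite mxE (negPf j0) (negPf j1).
  by rewrite (negPf kj) mulr0.
have hc0 : vge v c 0 by apply: vge_le hc.
have ha0 : vge v a 0 by apply: vge_le ha.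
have hM : forall i j, vge v (M i j) 0.
  move=> i j; case: (eqVneq j i0) => [->|j0].
    rewrite M0; apply: (vgeD hv).
      by have := vgeM hv hc0 (hU i); rewrite addr0.
    by have := vgeM hv ha0 (hW i); rewrite addr0.
  case: (eqVneq j i1) => [->|j1]; last by rewrite Mj.
  rewrite M1; apply: (vgeD hv); [apply: (vgeD hv); [apply: (vgeD hv)|]|].
  - by have := vgeM hv ha0 (hU i); rewrite addr0.
  - by have := vgeM hv hb (hW i); rewrite addr0.
  - by have := vgeM hv hc0 (hU' i); rewrite addr0.
  - by have := vgeM hv ha0 (hW' i); rewrite addr0.
have split0 : \det M = c * \det (colrep M i0 U) + a * \det (colrep M i0 W).
  rewrite (expand_det_col _ i0) !det_colrep !mulr_sumr -big_split /=.
  by apply: eq_bigr => i _; rewrite M0 mulrDl !mulrA.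
pose B := colrep M i0 W.
have hB : forall i j, vge v (B i j) 0.
  by move=> i j; rewrite mxE; case: ifP => _.
have B1 : forall i, B i i1 = (a * U i + c * U' i + a * W' i) + b * W i.
  by move=> i; rewrite mxE (negPf i10) M1; ring.
have alt : \det (colrep B i1 W) = 0.
  rewrite -det_tr (@determinant_alternate _ _ _ i0 i1) // 1?eq_sym //.
  by move=> k; rewrite !mxE [i0 == i1]eq_sym (negPf i10) !eqxx.
have splitB : \det B = \det (colrep B i1 (fun i => a * U i + c * U' i + a * W' i)).
  rewrite (expand_det_col _ i1) det_colrep.
  have := alt; rewrite det_colrep => alt'.
  transitivity (\sum_i (a * U i + c * U' i + a * W' i) * cofactor B i i1 +
     b * \sum_i W i * cofactor B i i1); last by rewrite alt' mulr0 addr0.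
  rewrite mulr_sumr -big_split /=.
  by apply: eq_bigr => i _; rewrite B1 mulrDl mulrA.
have hcol : forall i, vge v (a * U i + c * U' i + a * W' i) (Num.min m N).
  move=> i; apply: (vgeD hv); [apply: (vgeD hv)|].
  - by have := vgeM hv ha (hU i); rewrite addr0 => /vge_le; apply; rewrite ge_min lexx.
  - by have := vgeM hv hc (hU' i); rewrite addr0 => /vge_le; apply; rewrite ge_min lexx orbT.
  - by have := vgeM hv ha (hW' i); rewrite addr0 => /vge_le; apply; rewrite ge_min lexx.
have hdB : vge v (\det B) (Num.min m N) by rewrite splitB; apply: (det_colrep_vge hv).
rewrite -dM split0; apply: (vgeD hv).
  have := vgeM hv hc (det_colrep_vge hv i0 hM hU); rewrite addr0.
  by apply: vge_le; rewrite ge_min lexx.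
have := vgeM hv ha hdB; apply: vge_le.
case: (lerP m N) => mN.
  by rewrite ge_min lexx orbT.
by rewrite ge_min; apply/orP; left; rewrite lerDr.
Qed.


Lemma sum_coef_horner (K : fieldType) n (P : {poly K}) x :
  (size P <= n)%N -> \sum_(j < n) P`_j * x ^+ j = P.[x].
Proof. by move=> h; rewrite (horner_coef_wide _ h). Qed.

Lemma sum_coef_deriv (K : fieldType) n (P : {poly K}) x :
  (size P <= n)%N -> \sum_(j < n) P`_j * (x ^+ j.-1 *+ j) = P^`().[x].
Proof.
case: n => [|n] h.
  by move: h; rewrite leqn0 size_poly_eq0 => /eqP ->; rewrite big_ord0 deriv0 horner0.
have hd : (size P^`() <= n)%N.
  case: (eqVneq P 0) => [->|P0]; first by rewrite deriv0 size_poly0.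
  by rewrite -ltnS; apply: leq_trans (lt_size_deriv P0) h.
rewrite (horner_coef_wide _ hd) big_ord_recl /= mulr0n mulr0 add0r.
by apply: eq_bigr => i _; rewrite coef_deriv mulrnAr mulrnAl.
Qed.

Lemma size_MXn_le (K : fieldType) (P : {poly K}) k :
  (size (P * 'X^k)%R <= (size P).-1 + k.+1)%N.
Proof.
case: (eqVneq P 0) => [->|P0]; first by rewrite mul0r size_poly0.
have := size_poly_gt0 P; rewrite P0 size_mulXn //; lia.
Qed.

Lemma key_disc (K : fieldType) (v : K -> int) pi (hv : is_normalized_dval v pi)
  (f : {poly K}) (hfA : forall i : nat, inA v f`_i) x (N m : int) :
  0 <= m -> 0 <= N -> (1 < (size f^`()).-1 + (size f).-1)%N ->
  vge v x 0 -> vge v f.[x] N -> vge v f^`().[x] m ->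
  vge v (resultant f f^`()) (Num.min N (m + m)).
Proof.
move=> m0 N0 h1 hx hc ha.
set c := f.[x]; set a := f^`().[x]; set b := f^`()^`().[x].
have hfd : forall i : nat, vge v f^`()`_i 0.
  by move=> i; rewrite coef_deriv; apply: (vgeMn hv); apply: hfA.
have hfdd : forall i : nat, vge v f^`()^`()`_i 0.
  by move=> i; rewrite coef_deriv; apply: (vgeMn hv); apply: hfd.
have hpoly : forall (P : {poly K}), (forall i : nat, vge v P`_i 0) -> vge v P.[x] 0.
  move=> P hP; rewrite horner_coef; apply: (vge_sum hv) => i _.
  by apply: (vgeM0 hv); [apply: hP | apply: (vgeX hv)].
have hb : vge v b 0 by apply: hpoly.
pose dS := ((size f^`()).-1 + (size f).-1)%N.
pose P (i : 'I_dS) : {poly K} :=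
  match split i with inl k => f * 'X^k | inr k => f^`() * 'X^k end.
pose U (i : 'I_dS) : K := match split i with inl k => x ^+ k | inr k => 0 end.
pose W (i : 'I_dS) : K := match split i with inl k => 0 | inr k => x ^+ k end.
pose U' (i : 'I_dS) : K := match split i with inl k => x ^+ k.-1 *+ k | inr k => 0 end.
pose W' (i : 'I_dS) : K := match split i with inl k => 0 | inr k => x ^+ k.-1 *+ k end.
have hSP : forall i j, Sylvester_mx f f^`() i j = (P i)`_j.
  move=> i j; rewrite Sylvester_mxE /P; case: (split i) => k;
  by rewrite coefMXn leqNgt; case: ltnP.
have hsz : forall i, (size (P i) <= dS)%N.
  move=> i; rewrite /P; case: splitP => k _.
    apply: leq_trans (size_MXn_le _ _) _; move: (ltn_ord k); rewrite /dS; lia.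
  apply: leq_trans (size_MXn_le _ _) _; move: (ltn_ord k); rewrite /dS; lia.
have hxk : forall k, vge v (x ^+ k) 0 by move=> k; apply: (vgeX hv).
have hxk' : forall k, vge v (x ^+ k.-1 *+ k) 0 by move=> k; apply: (vgeMn hv).
apply: (keyG hv h1 (x := x) (c := c) (a := a) (N := N) (m := m) (b := b) (U := U) (W := W) (U' := U') (W' := W')) => //.
- by move=> i; rewrite /U; case: (split i) => k //; left.
- by move=> i; rewrite /W; case: (split i) => k //; left.
- by move=> i; rewrite /U'; case: (split i) => k //; left.
- by move=> i; rewrite /W'; case: (split i) => k //; left.
- move=> i j; rewrite hSP /P; case: (split i) => k; rewrite coefMXn;
  by case: ifP => _; [left | apply: hfA || apply: hfd].
- move=> i; under eq_bigr do rewrite hSP; rewrite sum_coef_horner //.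
  rewrite /P /U /W; case: (split i) => k; rewrite hornerM hornerXn /c /a; ring.
- move=> i; under eq_bigr do rewrite hSP; rewrite sum_coef_deriv //.
  rewrite /P /U /W /U' /W'; case: (split i) => k;
  rewrite derivM derivXn hornerD !hornerM hornerXn hornerMn hornerXn /a /b /c; ring.
Qed.


Lemma taylor_mono (K : fieldType) (v : K -> int) pi (hv : is_normalized_dval v pi)
  x y (k : int) i : 0 <= k -> vge v x 0 -> vge v y 0 -> vge v (y - x) k ->
  vge v (y ^+ i - x ^+ i - (x ^+ i.-1 *+ i) * (y - x)) (k + k).
Proof.
move=> k0 hx hy ht; elim: i => [|i IH].
  by rewrite !expr0 mulr0n mul0r !subrr; left.
have -> : y ^+ i.+1 - x ^+ i.+1 - (x ^+ i.+1.-1 *+ i.+1) * (y - x) =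
   y * (y ^+ i - x ^+ i - (x ^+ i.-1 *+ i) * (y - x)) +
   (x ^+ i.-1 *+ i) * ((y - x) * (y - x)).
  case: i {IH} => [|i] /=; first by rewrite !expr0 expr1 mulr1n mulr0n; ring.
  rewrite !exprS !mulrS; ring.
apply: (vgeD hv).
  by have := vgeM hv hy IH; rewrite add0r.
have := vgeM hv (vgeMn hv i (vgeX hv i.-1 hx)) (vgeM hv ht ht).
by rewrite add0r.
Qed.

Lemma taylor_poly (K : fieldType) (v : K -> int) pi (hv : is_normalized_dval v pi)
  (f : {poly K}) (hfA : forall i : nat, inA v f`_i) x y (k : int) :
  0 <= k -> vge v x 0 -> vge v y 0 -> vge v (y - x) k ->
  vge v (f.[y] - f.[x] - f^`().[x] * (y - x)) (k + k).
Proof.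
move=> k0 hx hy ht.
rewrite -(sum_coef_horner y (leqnn _)) -(sum_coef_horner x (leqnn _)).
rewrite -(sum_coef_deriv x (leqnn _)) mulr_suml -!sumrB.
apply: (vge_sum hv) => i _.
have -> : f`_i * y ^+ i - f`_i * x ^+ i - f`_i * (x ^+ i.-1 *+ i) * (y - x) =
  f`_i * (y ^+ i - x ^+ i - (x ^+ i.-1 *+ i) * (y - x)) by ring.
by have := vgeM hv (hfA i) (taylor_mono hv i k0 hx hy ht); rewrite add0r.
Qed.

Lemma dichotomy (K : fieldType) (v : K -> int) pi (hv : is_normalized_dval v pi)
  (f : {poly K}) (hfA : forall i : nat, inA v f`_i) x y (N h : int) :
  vge v x 0 -> vge v y 0 -> vge v f.[x] N -> vge v f.[y] N ->
  f^`().[x] != 0 -> v f^`().[x] <= h -> 0 <= h ->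
  vge v (y - x) (h + 1) -> vge v (y - x) (N - h).
Proof.
move=> hx hy hfx hfy a0 ah h0 ht.
case: (eqVneq (y - x) 0) => [->|t0]; first by left.
set k := v (y - x).
have hk : h + 1 <= k by case: ht => // /eqP; rewrite (negPf t0).
have k0 : 0 <= k by lia.
have hE := taylor_poly hv hfA k0 hx hy (vge_vx v t0).
have hD : vge v (f.[y] - f.[x]) N by apply: (vgeB hv).
set mn := Num.min N (k + k).
have hat : vge v (f^`().[x] * (y - x)) mn.
  have -> : f^`().[x] * (y - x) =
    (f.[y] - f.[x]) - (f.[y] - f.[x] - f^`().[x] * (y - x)) by ring.
  apply: (vgeB hv); apply: vge_le; [|exact: hD| |exact: hE];
  by rewrite /mn ge_min lexx ?orbT.
case: hat => [/eqP|]; first by rewrite mulf_eq0 (negPf a0) (negPf t0).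
case: hv => hm _ _ _; rewrite hm // /mn -/k => hmin; right.
move: hmin; case: (lerP N (k + k)) => Nk; lia.
Qed.


Definition cong (K : fieldType) (v : K -> int) (x y : K) (n : int) : bool :=
  (x - y == 0) || (n <= v (x - y)).

Lemma congP (K : fieldType) (v : K -> int) x y n : reflect (vge v (x - y) n) (cong v x y n).
Proof.
rewrite /cong; apply: (iffP orP) => [[/eqP|]|[]]; by [left|right|move=> ->; left|right].
Qed.

Lemma div_pi (K : fieldType) (v : K -> int) pi (hv : is_normalized_dval v pi) w (m : nat) :
  vge v w m%:Z -> exists2 z, vge v z 0 & w = pi ^+ m * z.
Proof.
have [p0 vp] := vpiX hv m.
case=> [->|hw]; first by exists 0; [left|rewrite mulr0].
case: (eqVneq w 0) => [->|w0]; first by exists 0; [left|rewrite mulr0].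
exists (w / pi ^+ m); last by rewrite mulrC divfK.
right; have z0 : w / pi ^+ m != 0 by rewrite mulf_neq0 // invr_eq0.
case: hv => hm _ _ _; have := hm _ _ p0 z0; rewrite mulrC divfK // vp; lia.
Qed.

Lemma has_sum_pos (T : Type) (p : pred T) (r : seq T) :
  has p r -> (0 < \sum_(a <- r) (p a : nat))%N.
Proof.
elim: r => //= a r IH /orP [pa|hr]; rewrite big_cons; first by rewrite pa.
by rewrite addn_gt0 IH ?orbT.
Qed.

Lemma cover_count (T : eqType) (S : Type) (P : S -> pred T) (reps : seq S) (s : seq T) :
  (forall y, y \in s -> has (fun a => P a y) reps) ->
  (size s <= \sum_(a <- reps) count (P a) s)%N.
Proof.
elim: s => [|y s IH] hc /=; first exact: leq0n.
have -> : \sum_(a <- reps) count (P a) (y :: s) =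
  (\sum_(a <- reps) (P a y : nat) + \sum_(a <- reps) count (P a) s)%N.
  by rewrite -big_split /=.
have := has_sum_pos (hc y (mem_head _ _)).
have := IH (fun z zs => hc z (@mem_behead _ (y :: s) _ zs)); lia.
Qed.

Lemma sum_le_const (T : eqType) (r : seq T) (F : T -> nat) C :
  (forall a, a \in r -> F a <= C)%N -> (\sum_(a <- r) F a <= size r * C)%N.
Proof.
elim: r => [|a r IH] h; first by rewrite big_nil.
rewrite big_cons /= mulSn; apply: leq_add; first exact: h (mem_head _ _).
by apply: IH => b br; apply: h; rewrite inE br orbT.
Qed.

Lemma count_gen (K : fieldType) (v : K -> int) pi (hv : is_normalized_dval v pi) q
  (hq : residue_card v q) (B : nat) (k : nat) : forall (m : nat) (s : seq K),
  (forall x, x \in s -> inA v x) ->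
  (forall x y, x \in s -> y \in s -> vge v (x - y) m%:Z) ->
  (forall x0, x0 \in s -> (count (fun y => cong v y x0 (m + k)%N%:Z) s <= B)%N) ->
  (size s <= q ^ k * B)%N.
Proof.
elim: k => [|k IH] m s hA hp hc.
  case: s hA hp hc => [|x0 s] // hA hp hc; rewrite expn0 mul1n.
  have := hc x0 (mem_head _ _); rewrite addn0; apply: leq_trans.
  rewrite -count_predT; apply: eq_leq; apply: eq_in_count => y ys /=.
  by symmetry; apply/congP; apply: hp => //; rewrite mem_head.
case: s hA hp hc => [|x0 s0] //; set s := x0 :: s0 => hA hp hc.
have x0s : x0 \in s by rewrite mem_head.
case: hq => reps [hsz hrA hri hrc].
pose P a y := cong v y (x0 + a * pi ^+ m) (m.+1)%:Z.
apply: leq_trans (cover_count (P := P) (reps := reps) _) _.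
  move=> y ys; have [z hz ez] := div_pi hv (hp _ _ ys x0s).
  have [a ar ha] := hrc z hz; apply/hasP; exists a => //; apply/congP.
  have -> : y - (x0 + a * pi ^+ m) = pi ^+ m * (z - a) by rewrite mulrBr -ez; ring.
  have [p0 vp] := vpiX hv m.
  have := vgeM hv (vge_vx v p0) ha; rewrite vp; apply: vge_le; lia.
rewrite expnS -mulnA -{1}hsz; apply: sum_le_const => a ar.
rewrite -size_filter; apply: (IH m.+1).
- by move=> x; rewrite mem_filter => /andP [_ /hA].
- move=> x y; rewrite !mem_filter => /andP [/congP hx _] /andP [/congP hy _].
  have -> : x - y = (x - (x0 + a * pi ^+ m)) - (y - (x0 + a * pi ^+ m)) by ring.
  exact: (vgeB hv).
- move=> y0; rewrite mem_filter => /andP [_ y0s].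
  rewrite count_filter; apply: leq_trans (hc _ y0s).
  rewrite addSnnS; apply: sub_count => y /andP [] //.
Qed.


Lemma distinct_count (K : fieldType) (v : K -> int) pi (hv : is_normalized_dval v pi)
  (N : nat) (s : seq K) :
  (forall i j : nat, (i < j < size s)%N -> ~ vge v (nth 0 s i - nth 0 s j) N%:Z) ->
  forall y0, (count (fun y => cong v y y0 N%:Z) s <= 1)%N.
Proof.
elim: s => [|a s IH] hd y0 //=.
have IH' := IH (fun i j hij => hd i.+1 j.+1 hij) y0.
case: (boolP (cong v a y0 N)) => /= ha; last by rewrite add0n.
suff -> : count (fun y => cong v y y0 N) s = 0%N by [].
apply/eqP; rewrite -leqn0 leqNgt -has_count; apply/hasPn => y ys; apply/negP => /congP hy.
have hj : (0 < (index y s).+1 < size (a :: s))%N by rewrite /= ltnS index_mem.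
apply: (hd _ _ hj) => /=; rewrite nth_index //.
have -> : a - y = (a - y0) - (y - y0) by ring.
by apply: (vgeB hv) => //; apply/congP.
Qed.

Lemma root_bound (K : fieldType) (v : K -> int) pi (hv : is_normalized_dval v pi)
  (f : {poly K}) (hfA : forall i : nat, inA v f`_i) (hmon : f \is monic)
  (hdisc : resultant f f^`() != 0)
  (r : nat) (hr : v (resultant f f^`()) = r%:Z)
  (N : nat) (hN : (2 * r < N)%N) x :
  inA v x -> vge v f.[x] N%:Z -> f^`().[x] != 0 /\ v f^`().[x] <= (r./2)%:Z.
Proof.
move=> hx hfx.
have hv1 := v1 hv.
have hpoly : forall (P : {poly K}), (forall i : nat, vge v P`_i 0) -> vge v P.[x] 0.
  move=> P hP; rewrite horner_coef; apply: (vge_sum hv) => i _.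
  by apply: (vgeM0 hv); [apply: hP | apply: (vgeX hv)].
have hlead : f`_(size f).-1 = 1 by move/monicP: hmon.
have hr2 := odd_double_half r; rewrite -addnn in hr2.
case: (ltnP (size f) 2) => hs1.
  have ef : f = (f`_0)%:P by apply: size1_polyC; lia.
  have f01 : f`_0 = 1 by move: hlead; have -> : (size f).-1 = 0%N by lia.
  move: hfx; rewrite ef hornerC f01 => -[/eqP|]; first by rewrite oner_eq0.
  rewrite hv1; lia.
case: (leqP (size f) 2) => hs2.
  have -> : f^`().[x] = 1.
    rewrite -(sum_coef_deriv x (n := 2)) //.
    rewrite big_ord_recr big_ord_recl big_ord0 /= mulr0n mulr0 add0r add0r.
    by rewrite mulr1n expr0 mulr1 -hlead; congr (nth 0 f _); lia.
  by rewrite oner_neq0 hv1; split.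
have h1 : (1 < (size f^`()).-1 + (size f).-1)%N by lia.
have hfd : forall i : nat, vge v f^`()`_i 0.
  by move=> i; rewrite coef_deriv; apply: (vgeMn hv); apply: hfA.
have ha0 : vge v f^`().[x] 0 by apply: hpoly.
have N0 : 0 <= N%:Z by [].
case: (eqVneq f^`().[x] 0) => [a0|a0].
  have mr : 0 <= (r + 1)%:Z by [].
  have hva : vge v f^`().[x] (r + 1)%:Z by left.
  have := key_disc hv hfA mr N0 h1 hx hfx hva.
  case=> [/eqP|]; first by rewrite (negPf hdisc).
  rewrite hr; case: (lerP N%:Z ((r+1)%:Z + (r+1)%:Z)) => _; lia.
split=> //.
have m0 : 0 <= v f^`().[x] by case: ha0 => // /eqP; rewrite (negPf a0).
have := key_disc hv hfA m0 N0 h1 hx hfx (vge_vx v a0).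
case=> [/eqP|]; first by rewrite (negPf hdisc).
rewrite hr; case: (lerP N%:Z (v f^`().[x] + v f^`().[x])) => _; lia.
Qed.


Theorem corollary3p12 (K : fieldType) (v : K -> int) (pi : K) (q : nat)
  (hv : is_normalized_dval v pi) (hcomp : dval_complete v)
  (hq : residue_card v q)
  (f : {poly K}) (hfA : forall i : nat, inA v f`_i) (hmon : f \is monic)
  (hdisc : resultant f f^`() != 0)
  (r : nat) (hr : v (resultant f f^`()) = r%:Z)
  (N : nat) (hN : (2 * r < N)%N)
  (s : seq K) (hs : distinct_roots_mod v f N s) :
  (size s <= q ^ (r + r./2 + 1))%N.
Proof.
case: hs => hsA hsf hsd.
have hr2 := odd_double_half r; rewrite -addnn in hr2.
set h := r./2 in hr2 *.
have q0 : (0 < q)%N.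
  case: (hq) => reps [hsz _ _ hrc]; have [a ar _] := hrc 0 (vge0 _ _).
  by rewrite -hsz; case: reps ar {hsz hrc}.
have hR x : x \in s -> f^`().[x] != 0 /\ v f^`().[x] <= h%:Z.
  by move=> xs; apply: (root_bound hv hfA hmon hdisc hr hN (hsA _ xs) (hsf _ xs)).
apply: leq_trans (count_gen hv hq (B := q ^ h) (k := h.+1) (m := 0) (s := s) hsA _ _) _.
- move=> x y xs ys; exact: (vgeB hv (hsA _ xs) (hsA _ ys)).
- move=> x0 x0s; rewrite -size_filter add0n.
  set t := filter _ s.
  have ht : forall y, y \in t -> y \in s /\ vge v (y - x0) (h.+1)%:Z.
    by move=> y; rewrite mem_filter => /andP [/congP ? ?].
  have hdich : forall y, y \in t -> vge v (y - x0) (N - h)%N%:Z.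
    move=> y /ht [ys hy]; have [a0 ah] := hR _ x0s.
    have -> : ((N - h)%N%:Z) = N%:Z - h%:Z by lia.
    apply: (dichotomy hv hfA (hsA _ x0s) (hsA _ ys) (hsf _ x0s) (hsf _ ys) a0 ah) => //.
    by have -> : h%:Z + 1 = (h.+1)%:Z by lia.
  have := count_gen hv hq (B := 1) (k := h) (m := (N - h)%N) (s := t) _ _ _.
  rewrite muln1; apply.
  + by move=> y /ht [ys _]; apply: hsA.
  + move=> y z yt zt; have -> : y - z = (y - x0) - (z - x0) by ring.
    exact: (vgeB hv (hdich _ yt) (hdich _ zt)).
  + move=> y0 _; have -> : (N - h + h)%N = N by lia.
    rewrite count_filter; apply: leq_trans (distinct_count hv hsd y0).
    by apply: sub_count => y /andP [].
- rewrite -expnD; apply: leq_pexp2l => //; lia.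
Qed.
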